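(* Let $z\in\mathbb{C}$ with $|z|>1$ and let $t\ge 2$ be an integer. Then $$\lim_{n\to\infty}\frac{l_{2^{t-1}n+2^{t-2}}(z)}{l_{2^{t-1}n+2^{t-2}-1}(z)}=\frac{(z^2-1)F_{t-1}(z)}{F_{t-1}(z)-2}.$$ In particular $\lim_{n\to\infty} l_{2n+1}(z)/l_{2n}(z)=z^2+1$, $\lim_{n\to\infty} l_{4n+2}(z)/l_{4n+1}(z)=\frac{z^4+1}{z^2+1}$, and $\lim_{n\to\infty} l_{8n+4}(z)/l_{8n+3}(z)=\frac{z^8+1}{(z^4+1)(z^2+1)}$.
   Context: For $n\ge0$ and $z\in\mathbb{C}$, $p_n(z)=\frac12\sum_{i=0}^{n}\left(1-(-1)^{\binom{n}{i}}\right)z^i$, i.e. the sum of $z^i$ over those $i\in\{0,\dots,n\}$ with $\binom{n}{i}$ odd. The polynomial $p_{2n}(z)-1$ is divisible by $z^2$, and $l_n(z)=\frac{p_{2n}(z)-1}{z^2}$. $F_k(z)=z^{2^k}+1$. *)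

(* Defs.v *)
From Stdlib Require Import Reals List Arith.
From Coquelicot Require Import Coquelicot.
Open Scope C_scope.

Fixpoint binom (n k : nat) : nat :=
  match n, k with
  | _, O => 1%nat
  | O, S _ => 0%nat
  | S n', S k' => (binom n' k' + binom n' k)%nat
  end.

Fixpoint cpow (z : C) (k : nat) : C :=
  match k with O => RtoC 1 | S k' => z * cpow z k' end.

Definition p (n : nat) (z : C) : C :=
  fold_right Cplus (RtoC 0)
    (map (fun i => if Nat.odd (binom n i) then cpow z i else RtoC 0) (seq 0 (S n))).

Definition l (n : nat) (z : C) : C := (p (2 * n) z - RtoC 1) / cpow z 2.

Definition F (k : nat) (z : C) : C := cpow z (2 ^ k) + RtoC 1.

(* Main.v *)
Require Import Defs.
From Stdlib Require Import Reals Lia Lra List.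
From Coquelicot Require Import Coquelicot.
Open Scope C_scope.

Lemma binom_gt : forall n k, (n < k)%nat -> binom n k = 0%nat.
Proof.
  induction n; intros k H; destruct k; simpl; try lia; auto.
  rewrite !IHn; lia.
Qed.

Lemma binom_par : forall m k,
  Nat.odd (binom (2*m) (2*k)) = Nat.odd (binom m k) /\
  Nat.odd (binom (2*m) (2*k+1)) = false.
Proof.
  induction m; intros k.
  - destruct k; simpl; auto. replace (k + S (k+0))%nat with (S (2*k))%nat by lia. simpl. auto.
  - change (Nat.odd (binom (2 * S m) (2*k)) = Nat.odd (binom (S m) k) /\ Nat.odd (binom (2 * S m) (2*k+1)) = false). assert (HN: (2 * S m = S (S (2*m)))%nat) by lia. rewrite HN. clear HN.
    destruct k.
    + split; [reflexivity|].

      destruct (IHm 0%nat) as [_ H]. simpl (2*0+1)%nat in H. change (Nat.odd (binom (S (S (2*m))) 1) = false). cbn [binom]. assert (E: binom (2*m) 0 = 1%nat) by (destruct (2*m)%nat; reflexivity). rewrite E. replace (1 + (1 + binom (2 * m) 1))%nat with (2 + binom (2*m) 1)%nat by lia. rewrite Nat.odd_add, H. reflexivity.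


    + replace (2 * S k)%nat with (S (S (2*k))) by lia.
      replace (S (S (2*k)) + 1)%nat with (S (S (2*k+1))) by lia.
      cbn [binom].
      destruct (IHm k) as [H1 H2]. destruct (IHm (S k)) as [H3 H4].
      replace (2 * S k)%nat with (S (2*k+1)) in H3, H4 by lia.
      replace (S (2*k+1) + 1)%nat with (S (S (2*k+1))) in H4 by lia.
      split.
      * replace (binom (2 * m) (2 * k) + binom (2 * m) (S (2 * k)) +
           (binom (2 * m) (S (2 * k)) + binom (2 * m) (S (S (2 * k)))))%nat
          with (binom (2 * m) (2 * k) + binom (2 * m) (S (2 * k+1)) + 2 * binom (2 * m) (2 * k+1))%nat
          by (replace (S (2*k)) with (2*k+1)%nat by lia; lia).
        rewrite !Nat.odd_add, H1, H3, Nat.odd_mul. simpl. rewrite Bool.xorb_false_r. reflexivity.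
      * replace (binom (2 * m) (2 * k + 1) + binom (2 * m) (S (2 * k + 1)) +
   (binom (2 * m) (S (2 * k + 1)) + binom (2 * m) (S (S (2 * k + 1)))))%nat
         with (binom (2 * m) (2 * k + 1) + binom (2 * m) (S (S (2 * k + 1))) + 2 * binom (2 * m) (S (2 * k + 1)))%nat by lia.
        rewrite !Nat.odd_add, H2, H4, Nat.odd_mul. reflexivity.
Qed.

Lemma binom_par2 : forall m j,
  Nat.odd (binom (S (2*m)) (2*j)) = Nat.odd (binom m j) /\
  Nat.odd (binom (S (2*m)) (S (2*j))) = Nat.odd (binom m j).
Proof.
  intros m j. split.
  - destruct j. simpl. destruct m; reflexivity.
    replace (2 * S j)%nat with (S (2*j+1)) by lia. cbn [binom].
    destruct (binom_par m j) as [_ H2]. destruct (binom_par m (S j)) as [H3 _].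
    replace (2 * S j)%nat with (S (2*j+1)) in H3 by lia.
    rewrite Nat.odd_add, H2, H3. reflexivity.
  - cbn [binom]. destruct (binom_par m j) as [H1 H2].
    rewrite Nat.odd_add, H1. replace (S (2*j)) with (2*j+1)%nat by lia. rewrite H2.
    apply Bool.xorb_false_r.
Qed.
Fixpoint csum (f : nat -> C) (N : nat) : C :=
  match N with O => RtoC 0 | S N' => f O + csum (fun i => f (S i)) N' end.

Lemma csum_ext : forall N f g, (forall i, (i < N)%nat -> f i = g i) -> csum f N = csum g N.
Proof.
  induction N; intros f g H; simpl; auto.
  rewrite H by lia. f_equal. apply IHN. intros; apply H; lia.
Qed.

Lemma csum_zero : forall N f, (forall i, f i = RtoC 0) -> csum f N = RtoC 0.
Proof.
  induction N; intros f H; simpl; auto. rewrite H, IHN; auto. apply Cplus_0_l.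
Qed.

Lemma csum_tail : forall N k f, (forall i, (N <= i)%nat -> f i = RtoC 0) ->
  csum f (N + k) = csum f N.
Proof.
  induction N; intros k f H; simpl.
  - apply csum_zero. intros; apply H; lia.
  - f_equal. apply IHN. intros; apply H; lia.
Qed.

Lemma csum_eo : forall N f, csum f (2 * N) = csum (fun j => f (2*j)%nat + f (2*j+1)%nat) N.
Proof.
  induction N; intros f; [reflexivity|].
  replace (2 * S N)%nat with (S (S (2*N))) by lia. simpl csum at 1.
  rewrite IHN. simpl csum. rewrite Cplus_assoc. f_equal.
  apply csum_ext. intros i _. f_equal; f_equal; lia.
Qed.

Lemma csum_scal : forall N c f, csum (fun i => c * f i) N = c * csum f N.
Proof.
  induction N; intros c f; simpl. ring. rewrite (IHN c (fun i => f (S i))). ring.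
Qed.

Lemma fold_csum : forall N s f,
  fold_right Cplus (RtoC 0) (map f (seq s N)) = csum (fun i => f (s + i)%nat) N.
Proof.
  induction N; intros s f; simpl; auto.
  rewrite Nat.add_0_r. f_equal. rewrite IHN. apply csum_ext. intros; f_equal; lia.
Qed.

Lemma cpow_add : forall z a b, cpow z (a + b) = cpow z a * cpow z b.
Proof. intros z a b; induction a; simpl. ring. rewrite IHa; ring. Qed.

Lemma cpow_mul : forall z a b, cpow z (a * b) = cpow (cpow z a) b.
Proof.
  intros z a b; induction b; simpl. rewrite Nat.mul_0_r; reflexivity.
  rewrite Nat.mul_succ_r, cpow_add, IHb. simpl. ring.
Qed.

Definition pterm (n : nat) (z : C) (i : nat) : C :=
  if Nat.odd (binom n i) then cpow z i else RtoC 0.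

Lemma p_csum : forall n z N, (S n <= N)%nat -> p n z = csum (pterm n z) N.
Proof.
  intros n z N H. unfold p. rewrite fold_csum. simpl.
  replace N with (S n + (N - S n))%nat by lia. rewrite csum_tail. reflexivity.
  intros i Hi. unfold pterm. rewrite binom_gt by lia. reflexivity.
Qed.

Lemma p_even : forall m z, p (2*m) z = p m (cpow z 2).
Proof.
  intros m z. rewrite (p_csum (2*m) z (2 * S m)) by lia. rewrite csum_eo.
  rewrite (p_csum m (cpow z 2) (S m)) by lia. apply csum_ext. intros j _.
  unfold pterm. destruct (binom_par m j) as [H1 H2]. rewrite H1, H2.
  rewrite <- cpow_mul. destruct (Nat.odd (binom m j)); ring.
Qed.

Lemma p_odd : forall m z, p (S (2*m)) z = (1 + z) * p m (cpow z 2).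
Proof.
  intros m z. rewrite (p_csum (S (2*m)) z (2 * S m)) by lia. rewrite csum_eo.
  rewrite (p_csum m (cpow z 2) (S m)) by lia. rewrite <- csum_scal. apply csum_ext. intros j _.
  unfold pterm. destruct (binom_par2 m j) as [H1 H2].
  replace (2*j+1)%nat with (S (2*j)) by lia. rewrite H1, H2.
  rewrite <- cpow_mul. destruct (Nat.odd (binom m j)); simpl; ring.
Qed.

Lemma p0 : forall z, p 0 z = 1.
Proof. intros; unfold p; simpl. ring. Qed.

Fixpoint G (s : nat) (w : C) : C :=
  match s with O => RtoC 1 | S s' => (1 + w) * G s' (cpow w 2) end.

Lemma cpow_2S : forall w s, cpow (cpow w 2) (2 ^ s) = cpow w (2 ^ S s).
Proof. intros. rewrite <- cpow_mul. reflexivity. Qed.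

Lemma pA : forall s n w, p (2^(S s)*n + 2^s) w = p n (cpow w (2^(S s))) * (1 + cpow w (2^s)).
Proof.
  induction s; intros n w.
  - replace (2^1*n+2^0)%nat with (S(2*n)) by (simpl; lia). rewrite p_odd.
    change (2^1)%nat with 2%nat. change (cpow w (2^0)) with (w*1). ring.
  - replace (2 ^ S (S s) * n + 2 ^ S s)%nat with (2 * (2^(S s)*n + 2^s))%nat
      by (simpl; lia).
    rewrite p_even, IHs, !cpow_2S. reflexivity.
Qed.

Lemma pB : forall s n w, p (2^(S s)*n + 2^s - 1) w = p n (cpow w (2^(S s))) * G s w.
Proof.
  induction s; intros n w.
  - replace (2^1*n+2^0-1)%nat with (2*n)%nat by (simpl; lia). rewrite p_even.
    change (2^1)%nat with 2%nat. simpl G. ring.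
  - assert (1 <= 2^s)%nat by (apply Nat.le_succ_l, Nat.neq_0_lt_0, Nat.pow_nonzero; lia).
    replace (2 ^ S (S s) * n + 2 ^ S s - 1)%nat with (S (2 * (2^(S s)*n + 2^s - 1)))%nat
      by (simpl; lia).
    rewrite p_odd, IHs, !cpow_2S. simpl G. ring.
Qed.

Lemma G_prop : forall s w, (w - 1) * G s w = cpow w (2^s) - 1.
Proof.
  induction s; intros w; simpl G.
  - simpl. ring.
  - rewrite <- cpow_2S, <- IHs. simpl. ring.
Qed.

Lemma Cmod_cpow : forall z k, Cmod (cpow z k) = (Cmod z ^ k)%R.
Proof. intros z k; induction k; simpl. apply Cmod_1. rewrite Cmod_mult, IHk; reflexivity. Qed.

Lemma Cmod_rev : forall x y, (Cmod x - Cmod y <= Cmod (x + y))%R.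
Proof.
  intros x y. pose proof (Cmod_triangle (x + y) (- y)). rewrite Cmod_opp in H.
  replace (x + y + - y) with x in H by ring. lra.
Qed.

Lemma Cmod_1plus : forall v, (Cmod v - 1 <= Cmod (1 + v))%R.
Proof. intros v. pose proof (Cmod_rev v 1). rewrite Cmod_1 in H. rewrite Cplus_comm. exact H. Qed.

Lemma pow_dec : forall d a b, (0 <= d <= 1)%R -> (a <= b)%nat -> (d ^ b <= d ^ a)%R.
Proof.
  intros d a b Hd Hab. replace b with (a + (b - a))%nat by lia. rewrite pow_add.
  assert (0 <= d ^ a)%R by (apply pow_le; lra).
  assert (d ^ (b - a) <= 1)%R by (rewrite <- (pow1 (b-a)); apply pow_incr; lra).
  nra.
Qed.

Lemma strong_ind : forall (P : nat -> Prop),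
  (forall n, (forall m, (m < n)%nat -> P m) -> P n) -> forall n, P n.
Proof.
  intros P H n. assert (forall N k, (k < N)%nat -> P k).
  { induction N; intros k Hk. lia. apply H. intros m Hm. apply IHN. lia. }
  apply (H0 (S n)). lia.
Qed.

Lemma p_low : forall n v, (1 < Cmod v)%R ->
  (Rmin 1 (Cmod v - 1) ^ n <= Cmod (p n v))%R.
Proof.
  apply (strong_ind (fun n => forall v, (1 < Cmod v)%R -> (Rmin 1 (Cmod v - 1) ^ n <= Cmod (p n v))%R)).
  intros n IH v Hv.
  set (d := Rmin 1 (Cmod v - 1)).
  assert (Hd : (0 < d <= 1)%R) by (split; [apply Rmin_glb_lt; lra | apply Rmin_l]).
  assert (Hv2 : (1 < Cmod (cpow v 2))%R) by (rewrite Cmod_cpow; simpl; nra).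
  assert (Hd2 : (d <= Rmin 1 (Cmod (cpow v 2) - 1))%R).
  { unfold d. apply Rle_min_compat_l. rewrite Cmod_cpow; simpl; nra. }
  destruct n as [|n].
  - rewrite p0, Cmod_1. simpl. lra.
  - destruct (Nat.Even_or_Odd (S n)) as [[m Hm]|[m Hm]].
    + rewrite Hm, p_even. assert (Hmn : (m < S n)%nat) by lia.
      specialize (IH m Hmn (cpow v 2) Hv2).
      apply Rle_trans with (d ^ m)%R. apply pow_dec; lia || lra.
      apply Rle_trans with (2 := IH). apply pow_incr. lra.
    + rewrite Hm. replace (2 * m + 1)%nat with (S (2*m)) by lia. rewrite p_odd, Cmod_mult.
      assert (Hmn : (m < S n)%nat) by lia.
      specialize (IH m Hmn (cpow v 2) Hv2).
      assert (d ^ m <= Cmod (p m (cpow v 2)))%R.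
      { apply Rle_trans with (2 := IH). apply pow_incr. lra. }
      assert (d <= Cmod (1 + v))%R.
      { pose proof (Cmod_1plus v). pose proof (Rmin_r 1 (Cmod v - 1)). fold d in H1. lra. }
      simpl pow. apply Rle_trans with (d * d ^ m)%R.
      apply Rmult_le_compat_l. lra. apply pow_dec; lia || lra.
      apply Rmult_le_compat; try lra. apply pow_le; lra.
Qed.

Lemma p_low2 : forall n v, (2 <= Cmod v)%R ->
  (1 <= Cmod (p n v))%R /\ (INR n * (Cmod v - 1) <= Cmod (p n v))%R.
Proof.
  apply (strong_ind (fun n => forall v, (2 <= Cmod v)%R ->
    (1 <= Cmod (p n v))%R /\ (INR n * (Cmod v - 1) <= Cmod (p n v))%R)).
  intros n IH v Hv.
  assert (Hv2 : (2 <= Cmod (cpow v 2))%R) by (rewrite Cmod_cpow; simpl; nra).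
  assert (Ev2 : Cmod (cpow v 2) = (Cmod v * Cmod v)%R) by (rewrite Cmod_cpow; simpl; ring).
  destruct n as [|n].
  - rewrite p0, Cmod_1. simpl. lra.
  - destruct (Nat.Even_or_Odd (S n)) as [[m Hm]|[m Hm]].
    + rewrite Hm, p_even. assert (Hmn : (m < S n)%nat) by lia.
      destruct (IH m Hmn (cpow v 2) Hv2) as [H1 H2]. split. auto.
      rewrite Ev2 in H2. rewrite mult_INR. simpl INR.
      assert (0 <= INR m)%R by apply pos_INR. nra.
    + rewrite Hm. replace (2 * m + 1)%nat with (S (2*m)) by lia. rewrite p_odd, Cmod_mult.
      assert (Hmn : (m < S n)%nat) by lia.
      destruct (IH m Hmn (cpow v 2) Hv2) as [H1 H2].
      pose proof (Cmod_1plus v).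
      rewrite Ev2 in H2.
      assert (0 <= INR m)%R by apply pos_INR.
      assert (H3 : (INR (2*m+1) <= Cmod (p m (cpow v 2)))%R).
      { rewrite plus_INR, mult_INR. simpl INR.
        destruct m. simpl in *. lra.
        assert (1 <= INR (S m))%R by (rewrite S_INR; pose proof (pos_INR m); lra).
        assert (3 <= Cmod v * Cmod v - 1)%R by nra.
        assert (INR (S m) * 3 <= INR (S m) * (Cmod v * Cmod v - 1))%R by (apply Rmult_le_compat_l; lra).
        lra. }
      replace (S (2*m)) with (2*m+1)%nat by lia.
      split; nra.
Qed.

Lemma p_decomp : forall j r q u, (r < 2^j)%nat -> p (2^j*q + r) u = p r u * p q (cpow u (2^j)).
Proof.
  induction j; intros r q u Hr.
  - simpl in Hr. assert (r = 0%nat) by lia. subst. rewrite p0.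
    replace (2^0*q+0)%nat with q by (simpl; lia). simpl cpow.
    rewrite Cmult_1_r. ring.
  - destruct (Nat.Even_or_Odd r) as [[r' Hr']|[r' Hr']]; subst r.
    + replace (2^S j*q + 2*r')%nat with (2*(2^j*q+r'))%nat by (simpl; lia).
      rewrite !p_even, IHj by (simpl in Hr; lia). rewrite cpow_2S. reflexivity.
    + replace (2^S j*q + (2*r'+1))%nat with (S (2*(2^j*q+r')))%nat by (simpl; lia).
      replace (2*r'+1)%nat with (S (2*r')) by lia.
      rewrite !p_odd, IHj by (simpl in Hr; lia). rewrite cpow_2S. ring.
Qed.

Lemma lt_pow2 : forall k, (k < 2^k)%nat.
Proof. induction k; simpl; lia. Qed.

Lemma bern : forall r k, (1 <= r)%R -> (1 + INR k * (r - 1) <= r ^ k)%R.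
Proof.
  intros r k Hr; induction k. simpl; lra.
  rewrite S_INR. simpl pow. assert (0 <= INR k)%R by apply pos_INR.
  assert (0 <= (r - 1) * (INR k * (r - 1)))%R by (apply Rmult_le_pos; [lra| apply Rmult_le_pos; lra]).
  assert (r * (1 + INR k * (r - 1)) <= r * r ^ k)%R by (apply Rmult_le_compat_l; lra).
  nra.
Qed.

Lemma p_div : forall u, (1 < Cmod u)%R -> forall M, exists N, forall n, (N <= n)%nat -> (M <= Cmod (p n u))%R.
Proof.
  intros u Hu M.
  destruct (INR_unbounded (/ (Cmod u - 1))) as [k Hk].
  assert (Hj : (2 <= Cmod (cpow u (2^k)))%R).
  { rewrite Cmod_cpow. pose proof (bern (Cmod u) (2^k) ltac:(lra)).
    pose proof (lt_INR _ _ (lt_pow2 k)).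
    assert (INR k * (Cmod u - 1) >= 1)%R.
    { assert (INR k * (Cmod u - 1) > / (Cmod u - 1) * (Cmod u - 1))%R by (apply Rmult_gt_compat_r; lra).
      rewrite Rinv_l in H1 by lra. lra. }
    nra. }
  set (c := (Rmin 1 (Cmod u - 1) ^ (2^k))%R).
  assert (Hc : (0 < c)%R) by (apply pow_lt; apply Rmin_glb_lt; lra).
  destruct (INR_unbounded (M / c)) as [K HK].
  exists (2^k * K)%nat. intros n Hn.
  assert (H2 : (2^k <> 0)%nat) by (apply Nat.pow_nonzero; lia).
  pose proof (Nat.div_mod n (2^k) H2) as Hdm.
  pose proof (Nat.mod_upper_bound n (2^k) H2) as Hmu.
  rewrite Hdm, p_decomp by exact Hmu. rewrite Cmod_mult.
  assert (HqK : (K <= n / 2^k)%nat).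
  { rewrite <- (Nat.div_mul K (2^k)) by exact H2. apply Nat.Div0.div_le_mono. lia. }
  destruct (p_low2 (n / 2^k) _ Hj) as [_ Hq].
  pose proof (p_low (n mod 2^k) u Hu) as Hr.
  assert (c <= Cmod (p (n mod 2 ^ k) u))%R.
  { apply Rle_trans with (2 := Hr). unfold c. apply pow_dec; [|lia].
    split. apply Rlt_le, Rmin_glb_lt; lra. apply Rmin_l. }
  apply le_INR in HqK.
  assert (M <= c * INR K)%R.
  { apply Rlt_le. replace M with (c * (M / c))%R by (field; lra). apply Rmult_lt_compat_l; lra. }
  assert (INR (n / 2^k) * 1 <= INR (n / 2^k) * (Cmod (cpow u (2 ^ k)) - 1))%R
    by (apply Rmult_le_compat_l; [apply pos_INR | lra]).
  assert (INR K <= Cmod (p (n / 2 ^ k) (cpow u (2 ^ k))))%R by lra.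
  assert (c * INR K <= Cmod (p (n mod 2 ^ k) u) * Cmod (p (n / 2 ^ k) (cpow u (2 ^ k))))%R
    by (apply Rmult_le_compat; try lra; apply pos_INR).
  lra.
Qed.

Lemma Cmod_neq : forall x c, (Cmod c < Cmod x)%R -> x - c <> 0.
Proof.
  intros x c H E. assert (x = c). { replace x with (x - c + c) by ring. rewrite E. ring. }
  subst. lra.
Qed.

Lemma abs_lim : forall (Q : nat -> C) (A B w : C), B <> 0 -> w <> 0 ->
  (forall M, exists N, forall n, (N <= n)%nat -> (M <= Cmod (Q n))%R) ->
  filterlim (fun n => ((Q n * A - 1) / w) / ((Q n * B - 1) / w)) eventually (locally (A / B)).
Proof.
  intros Q A B w HB Hw HQ. apply (proj2 (@filterlim_locally_ball_norm _ _ C_NormedModule _ _ _ _)). intros eps.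
  set (D := Cmod (A - B)). set (g := Cmod B).
  assert (Hg : (0 < g)%R) by (apply Cmod_gt_0; exact HB).
  assert (HD : (0 <= D)%R) by apply Cmod_ge_0.
  destruct eps as [e He]. simpl.
  destruct (HQ ((D / (g * e) + 2) / g)%R) as [N HN]. exists N. intros n Hn.
  specialize (HN n Hn).
  assert (H1 : (D / (g * e) + 2 <= Cmod (Q n * B))%R).
  { rewrite Cmod_mult. fold g. apply Rmult_le_compat_r with (r := g) in HN; [|lra].
    replace ((D / (g * e) + 2) / g * g)%R with (D / (g * e) + 2)%R in HN by (field; lra). lra. }
  assert (H2 : (D / (g * e) + 1 <= Cmod (Q n * B - 1))%R).
  { pose proof (Cmod_rev (Q n * B) (Copp 1)). rewrite Cmod_opp, Cmod_1 in H. unfold Cminus. lra. }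
  assert (H0 : (0 <= D / (g * e))%R).
  { apply Rmult_le_pos. lra. apply Rlt_le, Rinv_0_lt_compat, Rmult_lt_0_compat; lra. }
  assert (HQB : Q n * B - 1 <> 0). { intro E. rewrite E, Cmod_0 in H2. lra. }
  change (Cmod ((Q n * A - 1) / w / ((Q n * B - 1) / w) - A / B) < e)%R.
  replace ((Q n * A - 1) / w / ((Q n * B - 1) / w) - A / B) with ((A - B) / (B * (Q n * B - 1)))
    by (field; auto).
  rewrite Cmod_div by (apply Cmult_neq_0; auto). rewrite Cmod_mult. fold D g.
  set (X := Cmod (Q n * B - 1)) in *.
  assert (HX : (0 < X)%R) by lra.
  apply (Rmult_lt_reg_r (g * X)). apply Rmult_lt_0_compat; lra.
  replace (D / (g * X) * (g * X))%R with D by (field; lra).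
  assert (g * e * (D / (g * e)) = D)%R by (field; lra).
  assert (g * e * (D / (g * e) + 1) <= g * e * X)%R by (apply Rmult_le_compat_l; nra).
  nra.
Qed.

Lemma l_eq : forall m (z : C), z <> 0 -> l m z = (p m (cpow z 2) - 1) / cpow z 2.
Proof. intros. unfold l. rewrite p_even. reflexivity. Qed.

Lemma main_s : forall (z : C) (s : nat), (1 < Cmod z)%R ->
  filterlim
    (fun n : nat => l (2 ^ (S s) * n + 2 ^ s) z / l (2 ^ (S s) * n + 2 ^ s - 1) z)
    eventually
    (locally ((cpow z 2 - RtoC 1) * F (S s) z / (F (S s) z - RtoC 2))).
Proof.
  intros z s Hz.
  set (w := cpow z 2).
  assert (Hw : (1 < Cmod w)%R) by (unfold w; rewrite Cmod_cpow; simpl; nra).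
  assert (Hz0 : z <> 0) by (intro E; rewrite E, Cmod_0 in Hz; lra).
  assert (Hw0 : w <> 0) by (intro E; rewrite E, Cmod_0 in Hw; lra).
  set (v := cpow w (2^s)).
  assert (Hv : (1 < Cmod v)%R).
  { unfold v. rewrite Cmod_cpow. apply Rlt_le_trans with (Cmod w ^ 1)%R. simpl; lra.
    apply Rle_pow. lra. pose proof (Nat.pow_nonzero 2 s). lia. }
  set (u := cpow w (2^(S s))).
  assert (Hu : (1 < Cmod u)%R).
  { unfold u. rewrite Cmod_cpow. apply Rlt_le_trans with (Cmod w ^ 1)%R. simpl; lra.
    apply Rle_pow. lra. pose proof (Nat.pow_nonzero 2 (S s)). lia. }
  assert (HG : (w - 1) * G s w = v - 1) by (unfold v; apply G_prop).
  assert (Hw1 : w - 1 <> 0) by (apply Cmod_neq; rewrite Cmod_1; lra).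
  assert (Hv1 : v - 1 <> 0) by (apply Cmod_neq; rewrite Cmod_1; lra).
  assert (HG0 : G s w <> 0) by (intro E; rewrite E in HG; apply Hv1; rewrite <- HG; ring).
  assert (HF : F (S s) z = v + 1) by (unfold F, v, w; rewrite cpow_2S; reflexivity).
  replace ((w - RtoC 1) * F (S s) z / (F (S s) z - RtoC 2)) with ((1 + v) / G s w).
  2:{ rewrite HF. fold w. replace (v + 1 - RtoC 2) with (v - 1) by (simpl; ring).
      rewrite <- HG. field. auto. }
  apply filterlim_ext with
    (f := fun n => ((p n u * (1 + v) - 1) / w) / ((p n u * G s w - 1) / w)).
  { intros n. cbv beta. rewrite !l_eq by auto. fold w. rewrite pA, pB. reflexivity. }
  apply abs_lim; auto. apply p_div. exact Hu.
Qed.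

Theorem mainTheorem17 (z : C) (t : nat) (hz : (1 < Cmod z)%R) (ht : (2 <= t)%nat) :
  filterlim
    (fun n : nat => l (2 ^ (t - 1) * n + 2 ^ (t - 2)) z
                    / l (2 ^ (t - 1) * n + 2 ^ (t - 2) - 1) z)
    eventually
    (locally ((cpow z 2 - RtoC 1) * F (t - 1) z / (F (t - 1) z - RtoC 2)))
  /\ filterlim (fun n : nat => l (2 * n + 1) z / l (2 * n) z) eventually
       (locally (cpow z 2 + RtoC 1))
  /\ filterlim (fun n : nat => l (4 * n + 2) z / l (4 * n + 1) z) eventually
       (locally ((cpow z 4 + RtoC 1) / (cpow z 2 + RtoC 1)))
  /\ filterlim (fun n : nat => l (8 * n + 4) z / l (8 * n + 3) z) eventually
       (locally ((cpow z 8 + RtoC 1) / ((cpow z 4 + RtoC 1) * (cpow z 2 + RtoC 1)))).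
Proof.
  assert (Hw : (1 < Cmod (cpow z 2))%R) by (rewrite Cmod_cpow; simpl; nra).
  assert (Hw4 : (1 < Cmod (cpow z 2 * cpow z 2))%R) by (rewrite Cmod_mult; nra).
  assert (Hw1 : cpow z 2 - 1 <> 0) by (apply Cmod_neq; rewrite Cmod_1; lra).
  assert (Hw2 : cpow z 2 + 1 <> 0).
  { replace (cpow z 2 + 1) with (cpow z 2 - (- (1))) by ring. apply Cmod_neq; rewrite Cmod_opp, Cmod_1; lra. }
  assert (Hw3 : cpow z 2 * cpow z 2 + 1 <> 0).
  { replace (cpow z 2 * cpow z 2 + 1) with (cpow z 2 * cpow z 2 - (- (1))) by ring. apply Cmod_neq; rewrite Cmod_opp, Cmod_1; lra. }
  assert (E4 : cpow z 4 = cpow z 2 * cpow z 2) by (rewrite <- cpow_add; reflexivity).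
  assert (E8 : cpow z 8 = (cpow z 2 * cpow z 2) * (cpow z 2 * cpow z 2)) by (rewrite <- E4, <- cpow_add; reflexivity).
  split; [|split; [|split]].
  - replace (t - 1)%nat with (S (t - 2)) by lia. apply main_s. exact hz.
  - pose proof (main_s z 0 hz) as H.
    replace ((cpow z 2 - RtoC 1) * F 1 z / (F 1 z - RtoC 2)) with (cpow z 2 + 1) in H.
    + eapply filterlim_ext; [|exact H]. intros n. simpl. do 2 f_equal; lia.
    + unfold F. change (2^1)%nat with 2%nat. simpl RtoC.
      replace (cpow z 2 + 1 - 2) with (cpow z 2 - 1) by ring. field. auto.
  - pose proof (main_s z 1 hz) as H.
    replace ((cpow z 2 - RtoC 1) * F 2 z / (F 2 z - RtoC 2)) with ((cpow z 4 + 1) / (cpow z 2 + 1)) in H.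
    + eapply filterlim_ext; [|exact H]. intros n. simpl. do 2 f_equal; lia.
    + unfold F. change (2^2)%nat with 4%nat. rewrite E4. simpl RtoC.
      replace (cpow z 2 * cpow z 2 + 1 - 2) with ((cpow z 2 - 1) * (cpow z 2 + 1)) by ring.
      field. auto.
  - pose proof (main_s z 2 hz) as H.
    replace ((cpow z 2 - RtoC 1) * F 3 z / (F 3 z - RtoC 2)) with
      ((cpow z 8 + 1) / ((cpow z 4 + 1) * (cpow z 2 + 1))) in H.
    + eapply filterlim_ext; [|exact H]. intros n. simpl. do 2 f_equal; lia.
    + unfold F. change (2^3)%nat with 8%nat. rewrite E8, E4. simpl RtoC.
      replace (cpow z 2 * cpow z 2 * (cpow z 2 * cpow z 2) + 1 - 2) with
        ((cpow z 2 - 1) * (cpow z 2 + 1) * (cpow z 2 * cpow z 2 + 1)) by ring.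
      field. auto.
Qed.
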